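(* Let $K\subset\mathbb{R}^n$ be nonempty, convex, closed and bounded, let $C=\{x\in\mathbb{R}^m\mid Ax=b,\ x\ge0\}$ be nonempty and bounded, and let $f,h:\mathbb{R}^n\times\mathbb{R}^m\to\mathbb{R}$ be continuously differentiable functions such that, for every $y\in K$, $f(y,\cdot)$ and $h(y,\cdot)$ are convex, and such that $f$ takes only positive values. Let $y^*$ be an optimal solution of $(\widetilde{\mathcal{P}})$, let $x^*\in\widetilde{\mathcal{S}}(y^* )$, set $\alpha^*=h(y^*,x^* )$, $\beta^*=f(y^*,x^* )$ and $C^*=\{x\in C\mid h(y^*,x)\le\alpha^*,\ f(y^*,x)\le\beta^*\}$. Assume there exist $\varepsilon_0>0$ and $\delta>0$ such that for every $x\in C^*+\mathcal{B}(0,\varepsilon_0)$ there exists $\tilde x\in C^*$ with $$\|x-\tilde x\|^2\le\delta\Big[\big(h(y^*,x)-\alpha^*\big)^++\big(f(y^*,x)-\beta^*\big)^+\Big].$$ For every $\varepsilon>0$ let $y_\varepsilon$ be an optimal solution of $(\mathcal{P}_\varepsilon)$ and $x_\varepsilon\in\mathcal{S}_\varepsilon(y_\varepsilon)$. Then $f(y^*,x^* )-f(y_\varepsilon,x_\varepsilon)=o(\sqrt{\varepsilon})$ as $\varepsilon\to0$, and for every $\tau>0$, $f(y^*,x^* )-f(y_\varepsilon,x_\varepsilon)=o(\varepsilon^{1-\tau})$. Moreover, for every choice of $\tilde x_\varepsilon\in\mathcal{S}_\varepsilon(y^* )$ and every $\tau>0$, $h(y^*,\tilde x_\varepsilon)-h(y^*,x^*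 )=o(\varepsilon^{1-\tau})$ as $\varepsilon\to0$.
   Context: $f^2=(f)^2$; $t^+=\max\{t,0\}$; $\mathcal{B}(0,\varepsilon_0)$ is the open ball of radius $\varepsilon_0$ centred at $0$ in $\mathbb{R}^m$. For $y\in K$: $\mathcal{S}(y)=\operatorname{argmin}\{h(y,z)\mid z\in C\}$; for $\varepsilon>0$, $\mathcal{S}_\varepsilon(y)=\operatorname{argmin}\{h(y,z)+\varepsilon f^2(y,z)\mid z\in C\}$; $\widetilde{\mathcal{S}}(y)=\operatorname{argmin}\{f^2(y,z)\mid z\in\mathcal{S}(y)\}$. $(\mathcal{P}_\varepsilon)$: maximize $f(y,x)$ over $y\in K$, $x\in\mathcal{S}_\varepsilon(y)$; $y_\varepsilon\in K$ is optimal if $f(y_\varepsilon,x')\ge f(y,x)$ for all $x'\in\mathcal{S}_\varepsilon(y_\varepsilon)$, $y\in K$, $x\in\mathcal{S}_\varepsilon(y)$. $(\widetilde{\mathcal{P}})$: maximize $f(y,x)$ over $y\in K$, $x\in\widetilde{\mathcal{S}}(y)$; $y^*\in K$ is optimal if $f(y^*,x')\ge f(y,x)$ for all $x'\in\widetilde{\mathcal{S}}(y^* )$, $y\in K$, $x\in\widetilde{\mathcal{S}}(y)$. *)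

(* Defs.v *)
From HB Require Import structures.
From mathcomp Require Import all_boot all_order all_algebra.
From mathcomp Require Import all_classical all_reals all_analysis.
Set Implicit Arguments. Unset Strict Implicit. Unset Printing Implicit Defensive.
Import Order.TTheory GRing.Theory Num.Theory.
Import numFieldNormedType.Exports.
Local Open Scope classical_set_scope.
Local Open Scope ring_scope.

Section Defs.
Variable R : realType.

Definition sqnorm (k : nat) (v : 'rV[R]_k) : R := \sum_(i < k) (v 0 i) ^+ 2.
Definition enorm (k : nat) (v : 'rV[R]_k) : R := Num.sqrt (sqnorm v).

Definition pospart (t : R) : R := Num.max t 0.

Definition convex_set_rV (k : nat) (S : set 'rV[R]_k) : Prop :=
  forall x1 x2 (t : R), S x1 -> S x2 -> 0 <= t <= 1 ->
    S (t *: x1 + (1 - t) *: x2).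

Definition convex_fun_rV (k : nat) (g : 'rV[R]_k -> R) : Prop :=
  forall x1 x2 (t : R), 0 <= t <= 1 ->
    g (t *: x1 + (1 - t) *: x2) <= t * g x1 + (1 - t) * g x2.

(* continuously differentiable: Frechet differentiable everywhere, and the
   derivative p |-> 'd F p is continuous (in finite dimension, equivalently
   p |-> 'd F p v is continuous for every direction v) *)
Definition C1_fun (n m : nat) (F : 'rV[R]_n * 'rV[R]_m -> R) : Prop :=
  (forall p, differentiable F p) /\
  (forall v : 'rV[R]_n * 'rV[R]_m, continuous (fun p => 'd F p v)).

Definition argmin_on (k : nat) (g : 'rV[R]_k -> R) (D : set 'rV[R]_k)
  : set 'rV[R]_k := [set z | D z /\ forall z', D z' -> g z <= g z'].

Variables (n m : nat) (F H : 'rV[R]_n * 'rV[R]_m -> R)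
  (K : set 'rV[R]_n) (C : set 'rV[R]_m).

Definition Ssol (y : 'rV[R]_n) : set 'rV[R]_m := argmin_on (fun z => H (y, z)) C.
Definition Seps (eps : R) (y : 'rV[R]_n) : set 'rV[R]_m :=
  argmin_on (fun z => H (y, z) + eps * (F (y, z)) ^+ 2) C.
Definition Stilde (y : 'rV[R]_n) : set 'rV[R]_m :=
  argmin_on (fun z => (F (y, z)) ^+ 2) (Ssol y).

Definition opt_Peps (eps : R) (ye : 'rV[R]_n) : Prop :=
  K ye /\ forall x' y x, Seps eps ye x' -> K y -> Seps eps y x -> F (y, x) <= F (ye, x').
Definition opt_Ptilde (ys : 'rV[R]_n) : Prop :=
  K ys /\ forall x' y x, Stilde ys x' -> K y -> Stilde y x -> F (y, x) <= F (ys, x').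

End Defs.

(* Main.v *)
Require Import Defs.
From HB Require Import structures.
From mathcomp Require Import all_boot all_order all_algebra.
From mathcomp Require Import all_classical all_reals all_analysis.
From mathcomp Require Import ring lra.
Import Order.TTheory GRing.Theory Num.Theory.
Import numFieldNormedType.Exports.
Local Open Scope classical_set_scope.
Local Open Scope ring_scope.

Section Aux.
Variable R : realType.

Lemma slice_cont n m (G : 'rV[R]_n * 'rV[R]_m -> R) y :
  (forall p, {for p, continuous G}) -> continuous (fun z => G (y, z)).
Proof.
move=> cG z.
have hp : {for z, continuous (fun z : 'rV[R]_m => (y, z))}.
  apply: (@cvg_pair _ _ _ (nbhs z) (nbhs y) (nbhs z)) => /=; [exact: cvg_cst|exact: cvg_id].
exact: (continuous_comp hp (cG (y, z))).
Qed.

Lemma C_closed m p (A : 'M[R]_(p, m)) (b : 'cV[R]_p) :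
  closed [set x : 'rV[R]_m | A *m x^T = b /\ forall i, 0 <= x 0 i].
Proof.
have -> : [set x : 'rV[R]_m | A *m x^T = b /\ forall i, 0 <= x 0 i] =
   (\bigcap_(j in setT) [set x : 'rV[R]_m | \sum_k A j k * x 0 k = b j 0])
   `&` (\bigcap_(i in setT) [set x : 'rV[R]_m | 0 <= x 0 i]).
  apply/seteqP; split => x /=.
    move=> [Ab x0]; split => j _ //=.
    by rewrite -Ab mxE; apply: eq_bigr => k _; rewrite mxE.
  move=> [Ab x0]; split => [|i]; last exact: x0.
  apply/matrixP => j k; rewrite (ord1 k) -(Ab j I) mxE.
  by apply: eq_bigr => l _; rewrite mxE.
apply: closedI; apply: closed_bigI => j _.
  have cf : continuous (fun x : 'rV[R]_m => \sum_k A j k * x 0 k).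
    apply: (continuous_big (op := +%R)).
      exact: add_continuous.
    move=> k _ x.
    first [ apply: (@cvgM _ _ (nbhs x)); [exact: cvg_cst | exact: coord_continuous]
          | apply: cvgMr; exact: coord_continuous
          | apply: cvgMl; exact: coord_continuous
          | apply: continuousM; [exact: cst_continuous | exact: coord_continuous] ].
  have := @preimage_closed _ R (fun x : 'rV[R]_m => \sum_k A j k * x 0 k) [set r | r = b j 0].
  apply; [by move=> x _; exact: cf | exact: closed_eq].
have := @preimage_closed _ R (fun x : 'rV[R]_m => x 0 j) [set r | 0 <= r].
apply; [by move=> x _; exact: coord_continuous | exact: closed_ge].
Qed.

Lemma C_convex m p (A : 'M[R]_(p, m)) (b : 'cV[R]_p) :
  convex_set_rV [set x : 'rV[R]_m | A *m x^T = b /\ forall i, 0 <= x 0 i].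
Proof.
move=> x1 x2 t [A1 p1] [A2 p2] /andP[t0 t1]; split.
  by rewrite linearD !linearZ /= !mulmxDr -!scalemxAr A1 A2 -scalerDl subrKC scale1r.
move=> i; rewrite !mxE; apply: addr_ge0; apply: mulr_ge0 => //.
by rewrite subr_ge0.
Qed.

Lemma entry_le_norm k (x : 'rV[R]_k) i : `|x 0 i| <= `|x|.
Proof.
have /mapP[j Hj ->] : `|x 0 i| \in [seq `|x ij.1 ij.2| | ij : 'I_1 * 'I_k].
  by apply/mapP; exists (0, i) => //=; rewrite mem_enum.
rewrite [leRHS]/Num.norm /= mx_normrE; apply/bigmax_geP; right => /=; exists j => //.
Qed.


Lemma exists_argmin k (g : 'rV[R]_k -> R) (D : set 'rV[R]_k) :
  D !=set0 -> compact D -> continuous g -> exists z, argmin_on g D z.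
Proof.
move=> D0 cD cg.
have [c cD' Hc] := compact_EVT_min D0 cD (continuous_subspaceT cg).
exists c; split; first exact: set_mem cD'.
by move=> z Dz; apply: Hc; exact: mem_set.
Qed.

Lemma sqnorm_ge0 k (v : 'rV[R]_k) : 0 <= sqnorm v.
Proof. by apply: sumr_ge0 => i _; exact: sqr_ge0. Qed.

Lemma enorm_ge0 k (v : 'rV[R]_k) : 0 <= enorm v.
Proof. exact: sqrtr_ge0. Qed.

Lemma sqr_enorm k (v : 'rV[R]_k) : enorm v ^+ 2 = sqnorm v.
Proof. by rewrite sqr_sqrtr // sqnorm_ge0. Qed.

Lemma sqnormZ k (t : R) (v : 'rV[R]_k) : sqnorm (t *: v) = t ^+ 2 * sqnorm v.
Proof.
by rewrite /sqnorm mulr_sumr; apply: eq_bigr => i _; rewrite mxE exprMn.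
Qed.

Lemma enormZ k (t : R) (v : 'rV[R]_k) : 0 <= t -> enorm (t *: v) = t * enorm v.
Proof.
move=> t0; rewrite /enorm sqnormZ sqrtrM ?sqr_ge0 // sqrtr_sqr ger0_norm //.
Qed.

Lemma entry_le_enorm k (w : 'rV[R]_k) i : `|w 0 i| <= enorm w.
Proof.
rewrite -sqrtr_sqr /enorm ler_sqrt ?sqnorm_ge0 // /sqnorm (bigD1 i) //=.
by rewrite lerDl; apply: sumr_ge0 => j _; exact: sqr_ge0.
Qed.

Lemma pair_decomp n k (w : 'rV[R]_k) :
  ((0 : 'rV[R]_n), w) = \sum_(i < k) w 0 i *: ((0 : 'rV[R]_n), (delta_mx 0 i : 'rV[R]_k)).
Proof.
rewrite {1}(row_sum_delta w).
elim/big_rec2: _ => [//|i a b _ <-].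
have E (u v : 'rV[R]_n * 'rV[R]_k) : u.1 = v.1 -> u.2 = v.2 -> u = v.
  by case: u => ? ?; case: v => ? ? /= -> ->.
apply: E => /= //; apply/rowP => j; rewrite !mxE mulr0 addr0 //.
Qed.

Lemma tangent n k (F : 'rV[R]_n * 'rV[R]_k -> R) y x w :
  differentiable F (y, x) -> convex_fun_rV (fun z => F (y, z)) ->
  'd F (y, x) (0, w) <= F (y, x + w) - F (y, x).
Proof.
move=> dF cvx.
rewrite -deriveE //.
have dv := @diff_derivable _ _ _ F (y, x) (0, w) dF.
rewrite /derive (cvg_at_rightE _ _ dv).
set f := (fun h : R => _).
have fr : f @ at_right 0 --> lim (f @ 0^').
  move=> A /dv /nbhs_ballP [_ /posnumP[e] xe_A].
  by exists e%:num => //= z xe_z /gt_eqF/negbT/xe_A; exact.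
apply: limr_le; first by apply/cvg_ex; eexists; exact: fr.
near=> h.
have h0 : 0 < h by near: h; exact: nbhs_right_gt.
have h1 : h <= 1 by near: h; apply: nbhs_right_ltW.
rewrite /f /=.
have -> : h *: ((0 : 'rV[R]_n), w) + (y, x) = (y, h *: (x + w) + (1 - h) *: x).
  have E (u v : 'rV[R]_n * 'rV[R]_k) : u.1 = v.1 -> u.2 = v.2 -> u = v.
    by case: u => ? ?; case: v => ? ? /= -> ->.
  apply: E => /=; apply/rowP => j; rewrite !mxE; ring.
have := cvx (x + w) x h; rewrite h1 ltW //= => /(_ isT) cv.
change (h^-1 * (F (y, h *: (x + w) + (1 - h) *: x) - F (y, x)) <= F (y, x + w) - F (y, x)).
rewrite mulrC ler_pdivrMr //.
nra.
Unshelve. all: by end_near. Qed.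


Lemma dF_bound n k (F : 'rV[R]_n * 'rV[R]_k -> R) (C : set 'rV[R]_k) y :
  compact C -> (forall v, continuous (fun p => 'd F p v)) ->
  exists L, 0 <= L /\ forall x w, C x -> `|'d F (y, x) (0, w)| <= L * enorm w.
Proof.
move=> cC cdF.
have : forall i : 'I_k, exists Li : R, 0 <= Li /\
    forall x, C x -> `|'d F (y, x) (0, (delta_mx 0 i : 'rV[R]_k))| <= Li.
  move=> i; case: (pselect (C !=set0)) => [C0|C0]; last first.
    by exists 0; split => // x Cx; exfalso; apply: C0; exists x.
  have cg : continuous (fun x : 'rV[R]_k => `|'d F (y, x) (0, (delta_mx 0 i : 'rV[R]_k))|).
    apply: (@slice_cont n k (fun p => `|'d F p (0, (delta_mx 0 i : 'rV[R]_k))|) y).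
    move=> p.
    exact: (continuous_comp (cdF _ p) (@norm_continuous _ _ _)).
  have [c _ Hc] := compact_EVT_max C0 cC (continuous_subspaceT cg).
  exists (`|'d F (y, c) (0, (delta_mx 0 i : 'rV[R]_k))|); split; first exact: normr_ge0.
  move=> x Cx; apply: Hc; exact: mem_set.
move=> /choice [Lf HL].
exists (\sum_i Lf i); split; first by apply: sumr_ge0 => i _; case: (HL i).
move=> x w Cx.
rewrite (@pair_decomp n k w) linear_sum.
apply: le_trans; first exact: ler_norm_sum.
rewrite mulr_suml; apply: ler_sum => i _.
rewrite linearZ normrM /= mulrC.
have [_ HLi] := HL i.
apply: ler_pM; [exact: normr_ge0 | exact: normr_ge0 | exact: HLi | exact: entry_le_enorm].
Qed.

Lemma cont_obj k (h g : 'rV[R]_k -> R) e :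
  continuous h -> continuous g -> continuous (fun z => h z + e * g z ^+ 2).
Proof.
move=> ch cg.
have -> : (fun z => h z + e * g z ^+ 2) = h + (fun=> e) \* (g \* g).
  by apply/funext => u; rewrite /= expr2.
move=> z.
have c2 := @continuousM R _ g g z (cg z) (cg z).
have c3 := @continuousM R _ (fun=> e) (g \* g) z (@cst_continuous _ _ e z) c2.
exact: (continuousD (ch z) c3).
Qed.

Lemma lim_aux (u D G : R -> R) :
  (forall e, 0 < e -> 0 <= u e /\ u e <= D e * G e) ->
  (forall e, 0 < e -> 0 < D e) -> G e @[e --> 0^'+] --> 0 ->
  (fun e => u e / D e) @ 0^'+ --> 0.
Proof.
move=> uH DH GH.
apply: (@squeeze_cvgr _ _ _ _ (fun=> 0) G); last exact: GH; last exact: cvg_cst.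
near=> e.
have e0 : 0 < e by near: e; exact: nbhs_right_gt.
have [u0 uG] := uH e e0.
apply/andP; split; first by apply: divr_ge0 => //; exact: ltW (DH e e0).
by rewrite ler_pdivrMr ?DH // mulrC.
Unshelve. all: by end_near. Qed.

Lemma key m (C : set 'rV[R]_m) (g k : 'rV[R]_m -> R) (xs : 'rV[R]_m)
    (eps0 delta t L : R) :
  convex_set_rV C -> convex_fun_rV g -> convex_fun_rV k -> (forall z, 0 < g z) ->
  C xs -> (forall z, C z -> k xs <= k z) ->
  (forall z, C z -> k z <= k xs -> g xs ^+ 2 <= g z ^+ 2) ->
  0 < t -> t <= 1 -> 0 < delta -> 0 <= L ->
  (forall z, C z -> t * enorm (z - xs) < eps0) ->
  (forall z w, C z -> g z - g (z + w) <= L * enorm w) ->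
  (forall x, (exists c, [set x | C x /\ k x <= k xs /\ g x <= g xs] c /\ enorm (x - c) < eps0) ->
     exists xt, [set x | C x /\ k x <= k xs /\ g x <= g xs] xt /\
       sqnorm (x - xt) <= delta * (pospart (k x - k xs) + pospart (g x - g xs))) ->
  forall e z, 0 < e -> C z ->
  (forall z', C z' -> k z + e * g z ^+ 2 <= k z' + e * g z' ^+ 2) ->
  g xs - g z <= (2 * L ^+ 2 * delta * g xs / t) * e.
Proof.
move=> convC cvg cvk gpos Cxs xsmin xsmin2 t0 t1 dl0 L0 tH gradH EB e z e0 Cz zmin.
have kz := xsmin z Cz.
have h1 := zmin xs Cxs.
have bpos := gpos xs; have gzpos := gpos z.
have g2 : g z ^+ 2 <= g xs ^+ 2 by rewrite -(ler_pM2l e0); lra.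
have gzb : g z <= g xs by nra.
set d := g xs - g z.
have d0 : 0 <= d by rewrite /d subr_ge0.
set xt := t *: z + (1 - t) *: xs.
have t01 : 0 <= t <= 1 by rewrite t1 ltW.
have Cxt : C xt := convC z xs t Cz Cxs t01.
have kxt : k xt <= t * k z + (1 - t) * k xs := cvk z xs t t01.
have gxt : g xt <= t * g z + (1 - t) * g xs := cvg z xs t t01.
have nxt : enorm (xt - xs) < eps0.
  have -> : xt - xs = t *: (z - xs) by apply/rowP => j; rewrite !mxE; ring.
  by rewrite enormZ ?ltW //; exact: tH.
have Csxs : [set x | C x /\ k x <= k xs /\ g x <= g xs] xs by split.
have [xh [[Cxh [kxh gxh]] Hsq]] := EB xt (ex_intro _ xs (conj Csxs nxt)).
have p1 : pospart (k xt - k xs) <= t * e * (g xs ^+ 2 - g z ^+ 2).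
  rewrite /pospart ge_max; apply/andP; split; first by nra.
  by apply: mulr_ge0; [apply: mulr_ge0; exact: ltW | rewrite subr_ge0].
have p2 : pospart (g xt - g xs) <= 0.
  by rewrite /pospart ge_max lexx andbT; nra.
have Hsq2 : sqnorm (xt - xh) <= delta * (t * e * (g xs ^+ 2 - g z ^+ 2)).
  apply: (le_trans Hsq); rewrite ler_pM2l //; lra.
have gxh2 : g xs <= g xh.
  have := xsmin2 xh Cxh kxh; have := gpos xh; nra.
have gr := gradH xh (xt - xh) Cxh.
rewrite [xh + _]addrC subrK in gr.
set N := enorm (xt - xh) in gr.
have N0 : 0 <= N := enorm_ge0 _ _.
have N2 : N ^+ 2 <= delta * (t * e * (g xs ^+ 2 - g z ^+ 2)) by rewrite /N sqr_enorm.
have td : t * d <= L * N by rewrite /d; nra.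
have s3 : g xs ^+ 2 - g z ^+ 2 <= d * (2 * g xs) by rewrite /d; nra.
have s1 : (t * d) ^+ 2 <= (L * N) ^+ 2.
  have tdn : 0 <= t * d := mulr_ge0 (ltW t0) d0.
  nra.
have s4 : (t * d) ^+ 2 <= (t * d) * (2 * L ^+ 2 * delta * g xs * e).
  apply: (le_trans s1); rewrite exprMn.
  apply: le_trans (ler_wpM2l (sqr_ge0 L) N2) _.
  have : delta * (t * e * (g xs ^+ 2 - g z ^+ 2)) <= delta * (t * e * (d * (2 * g xs))).
    by rewrite ler_pM2l // ler_wpM2l // mulr_ge0 // ltW.
  move=> /(ler_wpM2l (sqr_ge0 L)) h; apply: (le_trans h); rewrite le_eqVlt; apply/orP; left; apply/eqP; ring.
have s5 : t * d <= 2 * L ^+ 2 * delta * g xs * e.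
  have [td0|td0] := eqVneq (t * d) 0.
    rewrite td0; apply: mulr_ge0; last exact: ltW.
    apply: mulr_ge0; last exact: ltW.
    apply: mulr_ge0; last exact: ltW.
    apply: mulr_ge0 => //; exact: sqr_ge0.
  have tdp : 0 < t * d by rewrite lt_def td0 mulr_ge0 // ltW.
  by move: s4; rewrite expr2 ler_pM2l.
rewrite -(ler_pM2l t0).
have -> : t * (2 * L ^+ 2 * delta * g xs / t * e) = 2 * L ^+ 2 * delta * g xs * e.
  by field; rewrite lt0r_neq0.
exact: s5.
Qed.

End Aux.
Arguments C_closed {R m p}.
Arguments entry_le_norm {R k}.
Arguments C_convex {R m p}.
Arguments exists_argmin {R k g D}.
Arguments cont_obj {R k h g}.
Arguments tangent {R n k F y x}.

Theorem theorem4p2 (R : realType) (n m p : nat)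
  (K : set 'rV[R]_n) (A : 'M[R]_(p, m)) (b : 'cV[R]_p)
  (F H : 'rV[R]_n * 'rV[R]_m -> R)
  (ys : 'rV[R]_n) (xs : 'rV[R]_m) (eps0 delta : R)
  (yeps : R -> 'rV[R]_n) (xeps : R -> 'rV[R]_m) :
  let C : set 'rV[R]_m := [set x | A *m x^T = b /\ forall i, 0 <= x 0 i] in
  K !=set0 -> convex_set_rV K -> closed K -> bounded_set K ->
  C !=set0 -> bounded_set C ->
  C1_fun F -> C1_fun H ->
  (forall y, K y -> convex_fun_rV (fun x => F (y, x)) /\ convex_fun_rV (fun x => H (y, x))) ->
  (forall q, 0 < F q) ->
  opt_Ptilde F H K C ys ->
  Stilde F H C ys xs ->
  let alphas := H (ys, xs) in
  let betas := F (ys, xs) in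
  let Cs : set 'rV[R]_m := [set x | C x /\ H (ys, x) <= alphas /\ F (ys, x) <= betas] in
  0 < eps0 -> 0 < delta ->
  (forall x, (exists c, Cs c /\ enorm (x - c) < eps0) ->
     exists xt, Cs xt /\
       sqnorm (x - xt) <= delta * (pospart (H (ys, x) - alphas) + pospart (F (ys, x) - betas))) ->
  (forall e, 0 < e -> opt_Peps F H K C e (yeps e) /\ Seps F H C e (yeps e) (xeps e)) ->
  [/\ (fun e => (F (ys, xs) - F (yeps e, xeps e)) / Num.sqrt e) @ 0^'+ --> 0,
      (forall tau, 0 < tau ->
         (fun e => (F (ys, xs) - F (yeps e, xeps e)) / e `^ (1 - tau)) @ 0^'+ --> 0) &
      (forall xt : R -> 'rV[R]_m, (forall e, 0 < e -> Seps F H C e ys (xt e)) ->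
       forall tau, 0 < tau ->
         (fun e => (H (ys, xt e) - H (ys, xs)) / e `^ (1 - tau)) @ 0^'+ --> 0)].
Proof.
move=> C K0 convK clK bK C0 bC [dF cdF] [dH cdH] convFH Fpos [Kys optys]
  [[Cxs xsmin] xsmin2] alphas betas Cs eps00 delta0 EB Heps.
have cC : compact C := bounded_closed_compact bC (C_closed A b).
have convC : convex_set_rV C := C_convex A b.
have contF y : continuous (fun z => F (y, z)).
  exact: (@slice_cont _ n m F y (fun p => differentiable_continuous (dF p))).
have contH y : continuous (fun z => H (y, z)).
  exact: (@slice_cont _ n m H y (fun p => differentiable_continuous (dH p))).
have [cvF cvH] := convFH ys Kys.
have exSeps e y : exists z, Seps F H C e y z.
  exact: (exists_argmin C0 cC (cont_obj e (contH y) (contF y))).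
have exStilde y : exists z, Stilde F H C y z.
  have [z0 [Cz0 Hz0]] := exists_argmin C0 cC (contH y).
  rewrite /Stilde; have -> : Ssol H C y = C `&` [set z | H (y, z) <= H (y, z0)].
    apply/seteqP; split => z /=.
      by move=> [Cz Hz]; split => //; exact: Hz.
    move=> [Cz Hz]; split => // z' Cz'; exact: (le_trans Hz (Hz0 z' Cz')).
  apply: exists_argmin.
  - by exists z0; split => //=.
  - apply: (compact_closedI cC).
    have := @preimage_closed _ R (fun z => H (y, z)) [set r | r <= H (y, z0)].
    by apply; [move=> x _; exact: contH | exact: closed_le].
  - have -> : (fun z => F (y, z) ^+ 2) = (fun z => F (y, z)) \* (fun z => F (y, z)).
      by apply/funext => u; rewrite /= expr2.
    by move=> z; apply: continuousM; exact: contF.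
have Stxs : Stilde F H C ys xs by split.
have lb e : 0 < e -> F (yeps e, xeps e) <= F (ys, xs).
  move=> e0; have [[Kye optye] [Cxe xemin]] := Heps e e0.
  have [xb [[Cxb xbmin] xbmin2]] := exStilde (yeps e).
  have h1 := optys xs (yeps e) xb Stxs Kye (conj (conj Cxb xbmin) xbmin2).
  have h2 := xemin xb Cxb; have h3 := xbmin (xeps e) Cxe.
  have p1 := Fpos (yeps e, xeps e); have p2 := Fpos (yeps e, xb).
  have : F (yeps e, xeps e) ^+ 2 <= F (yeps e, xb) ^+ 2.
    by rewrite -(ler_pM2l e0); lra.
  by move=> h4; nra.
have [M [_ HM]] := bC.
have Cb x : C x -> `|x| <= M + 1.
  by move=> Cx; apply: (HM (M + 1)) => //; rewrite ltrDl.
pose E := Num.sqrt (m%:R * (2 * (M + 1)) ^+ 2).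
have E0 : 0 <= E := sqrtr_ge0 _.
have EH z : C z -> enorm (z - xs) <= E.
  move=> Cz; rewrite /enorm /E ler_sqrt; last first.
    by apply: mulr_ge0 => //; exact: sqr_ge0.
  have bnd i : ((z - xs) 0 i) ^+ 2 <= (2 * (M + 1)) ^+ 2.
    have : `|(z - xs) 0 i| <= 2 * (M + 1).
      rewrite !mxE; apply: (le_trans (ler_normB _ _)).
      have := le_trans (entry_le_norm z i) (Cb z Cz).
      have := le_trans (entry_le_norm xs i) (Cb xs Cxs).
      lra.
    move=> /ler_normlP [h1 h2]; nra.
  apply: (le_trans (ler_sum _ (fun i _ => bnd i))).
  by rewrite sumr_const card_ord [leRHS]mulr_natl.
pose t := eps0 / (E + eps0).
have Ep : 0 < E + eps0 by lra.
have t0 : 0 < t by apply: divr_gt0.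
have t1 : t <= 1 by rewrite ler_pdivrMr // mul1r; lra.
have tH z : C z -> t * enorm (z - xs) < eps0.
  move=> Cz; have := EH z Cz => hz.
  apply: (le_lt_trans (ler_wpM2l (ltW t0) hz)).
  rewrite /t mulrAC ltr_pdivrMr // ltr_pM2l // ltrDl //.
have [L [L0 HL]] := @dF_bound _ n m F C ys cC cdF.
have gradH z w : C z -> F (ys, z) - F (ys, z + w) <= L * enorm w.
  move=> Cz; have := tangent w (dF (ys, z)) cvF.
  have := HL z w Cz; rewrite ler_norml => /andP[hl _].
  lra.
pose c := 2 * L ^+ 2 * delta * F (ys, xs) / t.
have ub e : 0 < e -> F (ys, xs) - F (yeps e, xeps e) <= c * e.
  move=> e0; have [[Kye optye] Sxe] := Heps e e0.
  have [xt [Cxt xtmin]] := exSeps e ys.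
  have h1 := optye (xeps e) ys xt Sxe Kys (conj Cxt xtmin).
  have h2 := @key _ m C (fun z => F (ys, z)) (fun z => H (ys, z)) xs eps0 delta t L
    convC cvF cvH (fun z => Fpos (ys, z)) Cxs xsmin.
  have h3 : forall z, C z -> H (ys, z) <= H (ys, xs) -> F (ys, xs) ^+ 2 <= F (ys, z) ^+ 2.
    move=> z Cz Hz; apply: xsmin2; split => // z' Cz'.
    exact: (le_trans Hz (xsmin z' Cz')).
  have := h2 h3 t0 t1 delta0 L0 tH gradH EB e xt e0 Cxt xtmin.
  rewrite -/c; lra.
have pw e tau : 0 < e -> e `^ (1 - tau) * e `^ tau = e.
  move=> e0; rewrite -powRD; last by apply/implyP => _; exact: lt0r_neq0.
  by rewrite subrK powRr1 // ltW.
split.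
- apply: (@lim_aux R _ (fun e => Num.sqrt e) (fun e => c * Num.sqrt e)).
  + move=> e e0; split; first by rewrite subr_ge0; exact: lb.
    by rewrite mulrCA -expr2 sqr_sqrtr; [exact: ub | exact: ltW].
  + by move=> e e0; rewrite sqrtr_gt0.
  + have hs : Num.sqrt e @[e --> 0^'+] --> (0:R).
      by apply: cvg_at_right_filter; have := @sqrt_continuous R 0; rewrite /continuous_at sqrtr0.
    by have := @cvgMl_tmp _ _ _ _ _ c _ hs; rewrite mulr0; apply; exact: _.
- move=> tau tau0.
  apply: (@lim_aux R _ (fun e => e `^ (1 - tau)) (fun e => c * e `^ tau)).
  + move=> e e0; split; first by rewrite subr_ge0; exact: lb.
    by rewrite mulrCA pw //; exact: ub.
  + by move=> e e0; exact: powR_gt0.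
  + by have := @cvgMl_tmp _ _ _ _ _ c _ (powR_cvg0 tau0); rewrite mulr0; apply; exact: _.
- move=> xt Hxt tau tau0.
  apply: (@lim_aux R _ (fun e => e `^ (1 - tau)) (fun e => F (ys, xs) ^+ 2 * e `^ tau)).
  + move=> e e0; have [Cxt xtmin] := Hxt e e0.
    have h := xtmin xs Cxs; have h' := xsmin (xt e) Cxt.
    split; first by rewrite subr_ge0.
    rewrite mulrCA pw //.
    have : 0 <= e * F (ys, xt e) ^+ 2 by apply: mulr_ge0; [exact: ltW | exact: sqr_ge0].
    lra.
  + by move=> e e0; exact: powR_gt0.
  + by have := @cvgMl_tmp _ _ _ _ _ (F (ys, xs) ^+ 2) _ (powR_cvg0 tau0); rewrite mulr0; apply; exact: _.
Qed.
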